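(* Let $n\ge2$ and let $\mathrm{Alt}(n)$ act naturally on $X=\{1,\ldots,n\}$; this action is sharply $(n-2)$-transitive. Then this $\mathrm{Alt}(n)$-set can be sequenced if and only if $n$ is even. Moreover, when $n$ is even, every enumeration of $X$ is a sequencing.
   Context: $\mathrm{Alt}(n)$ is the group of even permutations of $\{1,\ldots,n\}$. For a group $G$ acting sharply $k$-transitively on an $n$-element set $X$ (for any two ordered $k$-tuples of distinct elements there is exactly one $g\in G$ mapping the first to the second coordinatewise), a sequencing of $X$ is an enumeration $(x_1,\ldots,x_n)$ of all elements of $X$ such that the $n-k$ tuples $(x_1,\ldots,x_{k+1}),(x_2,\ldots,x_{k+2}),\ldots,(x_{n-k},\ldots,x_n)$ lie in pairwise distinct orbits of $G$ acting coordinatewise on ordered $(k+1)$-tuples of distinct elements of $X$. Here $k=n-2$. *)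

(* Defs.v *)
From mathcomp Require Import all_boot all_fingroup.
From mathcomp Require Import alt.
Set Implicit Arguments. Unset Strict Implicit. Unset Printing Implicit Defensive.

Definition sharply_transitive (T : finType) (G : {set {perm T}}) (k : nat) :=
  forall t u : k.-tuple T, uniq t -> uniq u ->
    exists! g : {perm T}, g \in G /\ map g t = u.

Definition same_orbit (T : finType) (G : {set {perm T}}) (s t : seq T) :=
  exists2 g : {perm T}, g \in G & map g s = t.

(* the (k+1)-tuple (x_{i+1}, ..., x_{i+k+1}) of s = (x_1, ..., x_n), 0-based i *)
Definition window (T : Type) (k i : nat) (s : seq T) := take k.+1 (drop i s).

Definition enumeration (T : finType) (s : seq T) := perm_eq s (enum T).

Definition sequencing (T : finType) (G : {set {perm T}}) (k : nat) (s : seq T) :=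
  enumeration s /\
  forall i j, i < j -> j < size s - k ->
    ~ same_orbit G (window k i s) (window k j s).

(* Main.v *)
Require Import Defs.
From mathcomp Require Import all_boot all_fingroup.
From mathcomp Require Import alt.
From mathcomp Require Import primitive_action zify.
Set Implicit Arguments. Unset Strict Implicit. Unset Printing Implicit Defensive.

Lemma agree_but1 (T : finType) (g h : {perm T}) a :
  (forall x, x != a -> g x = h x) -> g = h.
Proof.
move=> H; apply/permP => x; case: (eqVneq x a) => [->|/H //].
set z := (h^-1)%g (g a).
case: (eqVneq z a) => [za | nza].
  by rewrite -[in RHS]za /z permKV.
have := H z nza; rewrite /z permKV => /perm_inj E.
by move: nza; rewrite /z E eqxx.
Qed.

Lemma fix2 (T : finType) (q : {perm T}) a b : a != b ->
  (forall x, x != a -> x != b -> q x = x) -> q = 1%g \/ q = tperm a b.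
Proof.
move=> nab H.
have qin : forall y, y \in [:: a; b] -> q y \in [:: a; b].
  move=> y yab; rewrite !inE; apply/negPn/negP; rewrite negb_or => /andP[h1 h2].
  have /perm_inj E := H _ h1 h2.
  by move: h1 h2; rewrite E; move: yab; rewrite !inE => /orP[]/eqP->; rewrite eqxx.
have qa := qin a; have qb := qin b; rewrite !inE !eqxx ?orbT in qa qb.
move: (qa isT) (qb isT) => {qa qb} /orP[]/eqP qa /orP[]/eqP qb.
- by move/perm_inj: (etrans qa (esym qb)) nab => ->; rewrite eqxx.
- left; apply/permP => x; rewrite perm1.
  case: (eqVneq x a) => [->//|xa]; case: (eqVneq x b) => [->//|xb]; exact: H.
- right; apply/permP => x.
  case: (eqVneq x a) => [->|xa]; first by rewrite tpermL.
  case: (eqVneq x b) => [->|xb]; first by rewrite tpermR.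
  by rewrite tpermD 1?eq_sym // H.
- by move/perm_inj: (etrans qa (esym qb)) nab => ->; rewrite eqxx.
Qed.

Definition cycp (T : finType) (s : seq T) (Us : uniq s) : {perm T} :=
  perm (can_inj (prev_next Us)).

Lemma cycpE (T : finType) (s : seq T) (Us : uniq s) x : cycp Us x = next s x.
Proof. by rewrite permE. Qed.

Lemma odd_cycp (T : finType) (s : seq T) (Us : uniq s) (x0 : T) :
  (forall x, x \in s) -> odd_perm (cycp Us) = ~~ odd #|T|.
Proof.
move=> Ts.
have P0 : porbit (cycp Us) x0 = setT.
  apply/setP => y; rewrite inE; apply/porbitP.
  exists (findex (next s) x0 y); rewrite permX.
  rewrite (eq_iter (@cycpE _ _ Us)) iter_findex //.
  by rewrite (fconnect_cycle (cycle_next Us) (Ts x0)).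
rewrite /odd_perm.
have -> : porbits (cycp Us) = [set setT].
  apply/setP => A; rewrite inE; apply/imsetP/eqP => [[x _ ->]|->].
    by apply/eqP; rewrite -P0 eq_porbit_mem P0 inE.
  by exists x0.
by rewrite cards1 addbT.
Qed.

Lemma next_nth_uniq (T : eqType) (s : seq T) x0 i :
  uniq s -> i.+1 < size s -> next s (nth x0 s i) = nth x0 s i.+1.
Proof.
case: s => [//|y p] Us Hi.
rewrite next_nth mem_nth 1?ltnW // index_uniq 1?ltnW //=.
by apply: set_nth_default.
Qed.

Lemma orbit_iff (T : finType) m s : #|T| = m -> 2 <= m -> enumeration s ->
  same_orbit ('Alt_T)%g (window (m-2) 0 s) (window (m-2) 1 s) <-> odd m.
Proof.
move=> Tm m2 Es.
have Us : uniq s by rewrite (perm_uniq Es) enum_uniq.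
have Ss : size s = m by rewrite (perm_size Es) -cardE.
have Ts : forall x, x \in s by move=> x; rewrite (perm_mem Es) mem_enum.
rewrite /window drop0.
have -> : (m - 2).+1 = m - 1 by lia.
have lt1 : m - 1 < m by lia.
have [x0 _] : exists x0 : T, true.
  by case: s Ss {Es Us Ts} => [|x ?]; [move=> E; rewrite -E in m2|exists x].
set c := cycp Us.
have Mc : map c (take (m - 1) s) = take (m - 1) (drop 1 s).
  apply: (eq_from_nth (x0 := x0)).
    by rewrite size_map !size_take size_drop Ss lt1 ltnn.
  move=> i; rewrite size_map size_take Ss lt1 => Hi'.
  rewrite (nth_map x0); last by rewrite size_take Ss lt1.
  rewrite !nth_take // cycpE next_nth_uniq //; last by rewrite Ss; lia.
  by rewrite nth_drop add1n.
split.
  case=> g gA Mg.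
  have gc : g = c.
    apply: (@agree_but1 _ _ _ (nth x0 s (m - 1))) => x xa.
    have : {in take (m - 1) s, g =1 c} by apply/eq_in_map; rewrite Mg Mc.
    apply.
    have Ix : index x s < m by rewrite -Ss index_mem.
    have Ix' : index x s < m - 1.
      have : index x s != m - 1 by apply: contra xa => /eqP <-; rewrite nth_index.
      lia.
    by rewrite -(nth_index x0 (Ts x)) -(nth_take _ Ix') mem_nth // size_take Ss lt1.
  by move: gA; rewrite Alt_even gc (odd_cycp Us x0 Ts) Tm negbK.
move=> om; exists c => //.
by rewrite Alt_even (odd_cycp Us x0 Ts) Tm om.
Qed.

Lemma sharp (T : finType) m : #|T| = m -> 2 <= m ->
  sharply_transitive ('Alt_T)%g (m - 2).
Proof.
move=> Tm m2 t u Ut Uu.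
have tr := Alt_trans T.
have e : #|T|.-2 = m - 2 by rewrite Tm; lia.
rewrite e in tr.
have tin : forall v : (m-2).-tuple T, uniq v -> v \in dtuple_on (m-2) setT.
  by move=> v Uv; rewrite inE Uv; apply/subsetP.
have [g gA E] := atransP2 tr (tin _ Ut) (tin _ Uu).
have Mg : map g t = u by rewrite E.
exists g; split => // g' [g'A Mg'].
have cA : #|[set x | x \notin t]| = 2.
  have := cardsC [set x | x \in t].
  have -> : ~: [set x | x \in t] = [set x | x \notin t] by apply/setP=> x; rewrite !inE.
  rewrite cardsE (card_uniqP Ut) size_tuple Tm; lia.
have [a [b [nab EA]]] := cards2P _ (introT eqP cA).
set q := (g * g'^-1)%g.
have qfix : forall x, x != a -> x != b -> q x = x.
  move=> x xa xb.
  have xt : x \in t.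
    apply/negPn/negP => xt.
    have : x \in [set x | x \notin t] by rewrite inE.
    by rewrite EA !inE (negbTE xa) (negbTE xb).
  have : {in t, g =1 g'} by apply/eq_in_map; rewrite Mg Mg'.
  by move=> /(_ x xt); rewrite /q permM => ->; rewrite permK.
have qA : q \in ('Alt_T)%g by rewrite groupM ?groupV.
case: (fix2 nab qfix) => [q1|qt].
  by apply/eqP; rewrite eq_mulgV1 -/q q1.
by move: qA; rewrite qt Alt_even odd_tperm nab.
Qed.

Theorem theorem4p1 (n : nat) : 2 <= n ->
  sharply_transitive ('Alt_('I_n))%g (n - 2) /\
  ((exists s : seq 'I_n, sequencing ('Alt_('I_n))%g (n - 2) s) <-> ~~ odd n) /\
  (~~ odd n -> forall s : seq 'I_n, enumeration s ->
     sequencing ('Alt_('I_n))%g (n - 2) s).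
Proof.
move=> n2; have cn := card_ord n.
split; first exact: sharp cn n2.
have key : forall s : seq 'I_n, enumeration s ->
    sequencing ('Alt_('I_n))%g (n - 2) s <-> ~~ odd n.
  move=> s Es.
  have Ss : size s - (n - 2) = 2 by rewrite (perm_size Es) size_enum_ord; lia.
  split.
    case=> _ H; apply/negP => on.
    by apply: (H 0 1) => //; [rewrite Ss | apply/(orbit_iff cn n2 Es)].
  move=> en; split => // i j ij; rewrite Ss => j2.
  have -> : i = 0 by lia.
  have -> : j = 1 by lia.
  by move/(orbit_iff cn n2 Es); rewrite (negbTE en).
split.
  split; first by case=> s Hs; exact: (key s (proj1 Hs)).1 Hs.
  by move=> en; exists (enum 'I_n); apply/key => //; exact: perm_refl.
by move=> en s Es; apply/key.
Qed.
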